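(* For every integer $m\ge 4$, $$\lambda(C_3(T_{m-2,2}))<\frac{m-2}{2}+\frac{32}{(m-3)^2}+\frac{16}{m-3}.$$
   Context: $\lambda(G)$ denotes the spectral radius of the adjacency matrix of $G$. $T_{p,2}$ is the complete bipartite graph on $p$ vertices with parts of sizes $\lfloor p/2\rfloor$ and $\lceil p/2\rceil$. $C_3(T_{m-2,2})$ is the $m$-vertex graph obtained by identifying one vertex of a triangle with one vertex of $T_{m-2,2}$ lying in the part of size $\lfloor (m-2)/2\rfloor$. *)

(* Defs.v *)
From HB Require Import structures.
From mathcomp Require Import all_boot all_order all_algebra.
From mathcomp Require Import classical_sets reals.
Set Implicit Arguments. Unset Strict Implicit. Unset Printing Implicit Defensive.
Import Order.TTheory GRing.Theory Num.Theory.
Local Open Scope ring_scope.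
Local Open Scope classical_set_scope.

Definition adj_mx (R : realType) (n : nat) (e : rel 'I_n) : 'M[R]_n :=
  \matrix_(i < n, j < n) (e i j)%:R.

(* Spectral radius: largest modulus of an eigenvalue.  For a real symmetric
   matrix (adjacency matrices of simple graphs) all eigenvalues are real,
   so real eigenvalues suffice. *)
Definition spectral_radius (R : realType) (n : nat) (A : 'M[R]_n) : R :=
  sup [set x : R | exists mu : R, eigenvalue A mu /\ x = `|mu|].

(* The graph C_3(T_{m-2,2}) on vertices 0..m-1:
   with p = m-2 and a = floor(p/2),
   - vertices 0..a-1 form the part of size floor(p/2) of T_{p,2},
   - vertices a..p-1 form the part of size ceil(p/2),
   - vertices p and p+1 together with vertex 0 form the triangle
     (vertex 0 of the small part is identified with a triangle vertex). *)
Definition C3T_rel (m : nat) (i j : nat) : bool :=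
  let p := (m - 2)%N in
  let a := p./2 in
  [|| [&& (i < p)%N, (j < p)%N & ((i < a)%N != (j < a)%N)],
      (i == 0%N) && ((j == p) || (j == p.+1)),
      (j == 0%N) && ((i == p) || (i == p.+1)),
      (i == p) && (j == p.+1) | (i == p.+1) && (j == p)].

Definition C3T (m : nat) : rel 'I_m := fun i j => C3T_rel m i j.
Arguments C3T m i j : clear implicits.

(* Main.v *)
Require Import Defs.
From HB Require Import structures.
From mathcomp Require Import all_boot all_order all_algebra.
From mathcomp Require Import classical_sets reals.
From mathcomp Require Import boolp zify ring lra.
Import Order.TTheory GRing.Theory Num.Theory.
Local Open Scope ring_scope.

Definition wt (R : realType) (p : nat) (al be : R) (i : nat) : R :=
  if i == 0%N then al else if (i < p./2)%N then 1 else if (i < p)%N then be else 1.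

Arguments wt {R}.

Lemma sum_const_on (R : realType) (lo hi : nat) (F : nat -> R) (c : R) :
  (forall i, (lo <= i < hi)%N -> F i = c) -> \sum_(lo <= i < hi) F i = c *+ (hi - lo).
Proof.
move=> H; rewrite -sumr_const_nat; apply: eq_big_nat => i Hi; exact: H.
Qed.

Lemma natr_b (R : realType) (b : bool) : (b%:R : R) = if b then 1 else 0.
Proof. by case: b. Qed.

Ltac dec := repeat match goal with
 | |- context [leq ?x ?y] => first [ rewrite (_ : leq x y = true); [|by lia]
                                   | rewrite (_ : leq x y = false); [|by apply/negbTE; lia] ]
 | |- context [@eq_op ?T ?x ?y] => first [ rewrite (_ : @eq_op T x y = true); [|by lia]
                                   | rewrite (_ : @eq_op T x y = false); [|by apply/negbTE; lia] ]
 end.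

Lemma colsum (R : realType) (p : nat) (al be : R) (j : nat) : (2 <= p)%N -> (j < p.+2)%N ->
 \sum_(0 <= i < p.+2) (C3T_rel p.+2 i j)%:R * wt p al be i =
 if j == 0%N then (p - p./2)%:R * be + 2 else if (j < p./2)%N then (p - p./2)%:R * be
 else if (j < p)%N then al + (p./2 - 1)%:R else al + 1.
Proof.
move=> hp hj.
have E : (p.+2 - 2 = p)%N by lia.
have ha : (p./2 + p./2 + odd p = p)%N by rewrite addnn -[in RHS](odd_double_half p) addnC.
set a := p./2 in ha *.
have a1 : (1 <= a)%N by case: (odd p) ha; lia.
have ap : (a < p)%N by case: (odd p) ha; lia.
rewrite (@big_cat_nat _ _ _ p 0%N) //; try (by lia).
rewrite (@big_cat_nat _ _ _ a 0%N) //; try (by lia).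
rewrite (@big_cat_nat _ _ _ 1%N 0%N) //; try (by lia).
rewrite (@big_ltn _ _ _ p) // (@big_ltn _ _ _ p.+1) // (@big_geq _ _ _ p.+2) //.
have Ev : forall i, (C3T_rel p.+2 i j)%:R * wt p al be i =
  ((if [|| [&& (i < p)%N, (j < p)%N & (i < a)%N != (j < a)%N],
      (i == 0%N) && ((j == p) || (j == p.+1)),
      (j == 0%N) && ((i == p) || (i == p.+1)),
      (i == p) && (j == p.+1) | (i == p.+1) && (j == p)] then 1 else 0) *
  (if i == 0%N then al else if (i < a)%N then 1 else if (i < p)%N then be else 1) : R).
  by move=> i; rewrite /C3T_rel /wt /= E -/a natr_b.
have [j0|[j1|[j2|[j3|j4]]]] : (j == 0 \/ (1 <= j < a) \/ (a <= j < p) \/ j = p \/ j = p.+1)%N by lia.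
- rewrite (sum_const_on _ _ _ _ 0); last by move=> i hi; rewrite Ev; dec; rewrite /= ?mul0r ?mul1r ?mulr1.
  rewrite (sum_const_on _ _ _ _ 0); last by move=> i hi; rewrite Ev; dec; rewrite /= ?mul0r ?mul1r ?mulr1.
  rewrite (sum_const_on _ _ _ _ be); last by move=> i hi; rewrite Ev; dec; rewrite /= ?mul0r ?mul1r ?mulr1.
  rewrite !Ev; dec; rewrite /= ?mul0rn ?mulr1n -?(mulr_natl be) ?subn0; ring.
- rewrite (sum_const_on _ _ _ _ 0); last by move=> i hi; rewrite Ev; dec; rewrite /= ?mul0r ?mul1r ?mulr1.
  rewrite (sum_const_on _ _ _ _ 0); last by move=> i hi; rewrite Ev; dec; rewrite /= ?mul0r ?mul1r ?mulr1.
  rewrite (sum_const_on _ _ _ _ be); last by move=> i hi; rewrite Ev; dec; rewrite /= ?mul0r ?mul1r ?mulr1.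
  rewrite !Ev; dec; rewrite /= ?mul0rn ?mulr1n -?(mulr_natl be) ?subn0; ring.
- rewrite (sum_const_on _ _ _ _ al); last by move=> i hi; rewrite Ev; dec; rewrite /= ?mul0r ?mul1r ?mulr1.
  rewrite (sum_const_on _ _ _ _ 1); last by move=> i hi; rewrite Ev; dec; rewrite /= ?mul0r ?mul1r ?mulr1.
  rewrite (sum_const_on _ _ _ _ 0); last by move=> i hi; rewrite Ev; dec; rewrite /= ?mul0r ?mul1r ?mulr1.
  rewrite !Ev; dec; rewrite /= ?mul0rn ?mulr1n -?(mulr_natl be) ?subn0; ring.
- rewrite (sum_const_on _ _ _ _ al); last by move=> i hi; rewrite Ev; dec; rewrite /= ?mul0r ?mul1r ?mulr1.
  rewrite (sum_const_on _ _ _ _ 0); last by move=> i hi; rewrite Ev; dec; rewrite /= ?mul0r ?mul1r ?mulr1.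
  rewrite (sum_const_on _ _ _ _ 0); last by move=> i hi; rewrite Ev; dec; rewrite /= ?mul0r ?mul1r ?mulr1.
  rewrite !Ev; dec; rewrite /= ?mul0rn ?mulr1n -?(mulr_natl be) ?subn0; ring.
- rewrite (sum_const_on _ _ _ _ al); last by move=> i hi; rewrite Ev; dec; rewrite /= ?mul0r ?mul1r ?mulr1.
  rewrite (sum_const_on _ _ _ _ 0); last by move=> i hi; rewrite Ev; dec; rewrite /= ?mul0r ?mul1r ?mulr1.
  rewrite (sum_const_on _ _ _ _ 0); last by move=> i hi; rewrite Ev; dec; rewrite /= ?mul0r ?mul1r ?mulr1.
  rewrite !Ev; dec; rewrite /= ?mul0rn ?mulr1n -?(mulr_natl be) ?subn0; ring.
Qed.




Lemma ineqs (R : realFieldType) (P a d e : R) : 2 <= P -> 2*a <= P -> P <= 2*a+1 -> 1 <= a ->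
  d * P = 8 -> e*(P-1) = 16 -> 0 < d -> 0 < e ->
  [/\ (P-a)*(a+d) <= (P/2+e)^+2, (P-a)*(a+d) + 2*(P/2+e) <= (P/2+e)^+2*(1+d) & 2 + d <= P/2+e].
Proof.
move=> hP h1 h2 ha hd he d0 e0.
have h3 : (P-a)*a <= P^+2/4 by nra.
have h4 : (P-a)*d <= 6 by nra.
have h5 : P * e = 16 + e by nra.
have h6 : (P/2+e)^+2 = P^+2/4 + P*e + e^+2 by field.
have h7 : P^+2/4 * d = 2 * P by rewrite (_ : P^+2/4*d = P*(d*P)/4); [rewrite hd; field | field].
split.
- rewrite h6; nra.
- have : (P/2+e)^+2*(1+d) >= (P/2+e)^+2 + 2*P.
    rewrite mulrDr mulr1 lerD2l -h7; apply: ler_pM; [nra|lra|rewrite h6; nra|lra].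
  rewrite h6; nra.
- have [P4|P4] := lerP 4 P; first by nra.
  nra.
Qed.

Theorem lemmaA3 (R : realType) (m : nat) : (4 <= m)%N ->
  spectral_radius (adj_mx R (C3T m)) <
    (m%:R - 2) / 2 + 32 / (m%:R - 3) ^+ 2 + 16 / (m%:R - 3).
Proof.
move=> hm.
have [p -> hp] : exists2 p, m = p.+2 & (2 <= p)%N by exists (m-2)%N; lia.
set P := (p%:R : R).
have hP : 2 <= P by rewrite /P (ler_nat R 2 p).
have Em : (p.+2)%:R = P + 2 :> R by rewrite -addn2 natrD.
have ha : (p./2 + p./2 + odd p = p)%N by rewrite addnn -[in RHS](odd_double_half p) addnC.
set a := p./2 in ha *.
have a1 : (1 <= a)%N by case: (odd p) ha; lia.
have ap : (a <= p)%N by case: (odd p) ha; lia.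
set ar := (a%:R : R).
have [Po1 Po2] : 2*ar <= P /\ P <= 2*ar+1.
  rewrite /P /ar -ha !natrD; case: (odd p) => /=; split; lra.
have ar1 : 1 <= ar by rewrite /ar (ler_nat R 1 a).
have Epa : (p - a)%:R = P - ar :> R by rewrite natrB.
have Ea1 : (a - 1)%:R = ar - 1 :> R by rewrite natrB.
set d := 8 / P.
set e := 16 / (P - 1).
have P0 : P != 0 by rewrite gt_eqF //; lra.
have P10 : P - 1 != 0 by rewrite gt_eqF //; lra.
have dP : d * P = 8 by rewrite /d divfK.
have eP : e * (P - 1) = 16 by rewrite /e divfK.
have d0 : 0 < d by rewrite /d divr_gt0 //; lra.
have e0 : 0 < e by rewrite /e divr_gt0 //; lra.
set L := P / 2 + e.
have L0 : 0 < L by rewrite /L; lra.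
have [I1 I2 I3] := @ineqs _ P ar d e hP Po1 Po2 ar1 dP eP d0 e0.
rewrite -/L in I1 I2 I3.
set al := 1 + d.
set be := (ar + d) / L.
have be0 : 0 < be by rewrite /be divr_gt0 //; lra.
have LbE : L * be = ar + d by rewrite /be mulrC divfK //; lra.
have key : forall j : 'I_(p.+2),
    \sum_(i < p.+2) (C3T_rel p.+2 i j)%:R * wt p al be i <= L * wt p al be j.
  move=> j.
  rewrite -(big_mkord xpredT (fun i => (C3T_rel p.+2 i j)%:R * wt p al be i)) colsum //.
  rewrite /wt -/a Epa Ea1.
  have K1 : (P - ar) * be <= L.
    by rewrite /be mulrA ler_pdivrMr // -expr2.
  have K2 : (P - ar) * be + 2 <= L * al.
    rewrite -(ler_pM2r L0).
    have -> : ((P - ar) * be + 2) * L = (P - ar) * (ar + d) + 2 * L by rewrite /be; field; lra.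
    by rewrite mulrAC -expr2.
  case: (nat_of_ord j == 0%N); case: (nat_of_ord j < a)%N; case: (nat_of_ord j < p)%N; rewrite /= ?mulr1 ?LbE //. all: have alE : al = 1 + d by []; try lra.
have eigb : forall mu, eigenvalue (adj_mx R (C3T p.+2)) mu -> `|mu| <= L.
  move=> mu /eigenvalueP [v Hv vn0].
  pose w (i : 'I_(p.+2)) := wt p al be i.
  have wpos : forall i, 0 < w i.
    by move=> i; rewrite /w /wt /al; case: ifP => _; [lra|case: ifP => _; [lra|case: ifP => _; lra]].
  pose F (i : 'I_(p.+2)) := `|v 0 i| / w i.
  case: (@arg_maxP _ _ _ ord0 xpredT F isT) => j _ Hj.
  set t := F j.
  have Hb : forall i, `|v 0 i| <= t * w i.
    by move=> i; rewrite -ler_pdivrMr //; exact: Hj.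
  have tpos : 0 < t.
    rewrite ltNge; apply/negP => t0; move/negP: vn0; apply; apply/eqP/rowP => i.
    rewrite mxE; apply/eqP; rewrite -normr_le0; apply: le_trans (Hb i) _.
    by apply: mulr_le0_ge0 => //; exact: ltW (wpos i).
  have vj : `|v 0 j| = t * w j by rewrite /t /F divfK // gt_eqF.
  have Hc : mu * v 0 j = \sum_i v 0 i * (C3T_rel p.+2 i j)%:R.
    have := congr1 (fun M : 'M[R]_(1, p.+2) => M 0 j) Hv; rewrite !mxE => <-.
    by apply: eq_bigr => i _; rewrite mxE.
  have S1 : `|mu| * `|v 0 j| <= \sum_i `|v 0 i| * (C3T_rel p.+2 i j)%:R.
    rewrite -normrM Hc; apply: le_trans (ler_norm_sum _ _ _) _.
    by apply: ler_sum => i _; rewrite normrM (ger0_norm (ler0n _ _)).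
  have S2 : \sum_i `|v 0 i| * (C3T_rel p.+2 i j)%:R <=
            t * \sum_(i < p.+2) (C3T_rel p.+2 i j)%:R * wt p al be i.
    rewrite mulr_sumr; apply: ler_sum => i _.
    rewrite mulrCA [X in X <= _]mulrC; apply: ler_wpM2l; [exact: ler0n | exact: Hb].
  have S3 := key j.
  have vjpos : 0 < `|v 0 j| by rewrite vj mulr_gt0.
  rewrite -(ler_pM2r vjpos); apply: le_trans S1 _; apply: le_trans S2 _.
  by rewrite vj mulrCA; apply: ler_wpM2l; [exact: ltW tpos | exact: S3].
rewrite /spectral_radius Em (_ : P + 2 - 2 = P); last by ring.
rewrite (_ : P + 2 - 3 = P - 1); last by ring.
set S := (X in sup X).
have supL : sup S <= L.
  case: (pselect (S !=set0)%classic) => [ne|ne].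
    by apply: ge_sup => // x [mu [hmu ->]]; exact: eigb.
  have -> : S = set0.
    by apply/seteqP; split => x Sx //; exfalso; apply: ne; exists x.
  by rewrite sup0; lra.
have pos : 0 < 32 / (P - 1) ^+ 2 by rewrite divr_gt0 // exprn_gt0 //; lra.
apply: le_lt_trans supL _; rewrite /L /e; lra.
Qed.
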